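(* Let $m\ge2$ and let $\mathcal{A}\in\mathbb{T}_{m,n}$ be a circulant tensor with root tensor $\mathcal{A}_1$. If $\mathcal{A}_1$ is copositive (respectively strictly copositive), then $\mathcal{A}$ is copositive (respectively strictly copositive). Moreover, if $\mathcal{A}$ is doubly circulant, then $\mathcal{A}$ is copositive (respectively strictly copositive) if and only if $\mathcal{A}_1$ is copositive (respectively strictly copositive).
   Context: $\mathbb{T}_{m,n}$ is the space of real $m$th order $n$-dimensional tensors $\mathcal{A}=(a_{i_1\ldots i_m})$, $i_j\in[n]$. For $\mathcal{A}\in\mathbb{T}_{m,n}$ and $x\in\mathbb{R}^n$, $\mathcal{A}x^m=\sum_{i_1,\dots,i_m}a_{i_1\ldots i_m}x_{i_1}\cdots x_{i_m}$. $\mathcal{A}$ is copositive if $\mathcal{A}x^m\ge0$ for all $x\in\mathbb{R}^n_+$, and strictly copositive if $\mathcal{A}x^m>0$ for all $x\in\mathbb{R}^n_+\setminus\{0\}$ (same definitions in $\mathbb{T}_{m-1,n}$). $\mathcal{A}$ is circulant if $a_{i_1\ldots i_m}=a_{k_1\ldots k_m}$ whenever $k_j\equiv i_j+1 \pmod n$ with $k_j\in[n]$ for all $j$. The $k$th row tensor $\mathcal{A}_k\in\mathbb{T}_{m-1,n}$ has entries $(\mathcal{A}_k)_{j_1\ldots j_{m-1}}=a_{kj_1\ldots j_{m-1}}$; $\mathcal{A}_1$ is the root tensor. A circulant tensor is doubly circulant if all its row tensors coincide with its root tensor, i.e. $\mathcal{A}_k=\mathcal{A}_1$ for all $k\in[n]$.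 *)

(* Defs.v *)
From HB Require Import structures.
From mathcomp Require Import all_boot all_order all_algebra.
Set Implicit Arguments. Unset Strict Implicit. Unset Printing Implicit Defensive.
Import Order.TTheory GRing.Theory Num.Theory.
Local Open Scope ring_scope.

(* A real m-th order n-dimensional tensor: entries indexed by m-tuples of
   indices in [n] = 'I_n (index i of the paper is the ordinal i-1). *)
Definition tensor (R : realFieldType) (m n : nat) := m.-tuple 'I_n -> R.

Definition tpoly (R : realFieldType) (m n : nat) (A : tensor R m n) (x : 'I_n -> R) : R :=
  \sum_(t : m.-tuple 'I_n) A t * \prod_(j < m) x (tnth t j).

Definition nonneg_vec (R : realFieldType) (n : nat) (x : 'I_n -> R) : Prop :=
  forall i, 0 <= x i.

Definition copositive (R : realFieldType) (m n : nat) (A : tensor R m n) : Prop :=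
  forall x : 'I_n -> R, nonneg_vec x -> 0 <= tpoly A x.

Definition strictly_copositive (R : realFieldType) (m n : nat) (A : tensor R m n) : Prop :=
  forall x : 'I_n -> R, nonneg_vec x -> (exists i, x i != 0) -> 0 < tpoly A x.

Definition circulant (R : realFieldType) (m n : nat) (A : tensor R m n) : Prop :=
  forall t : m.-tuple 'I_n, A t = A [tuple of map (@ordS n) t].

Definition row_tensor (R : realFieldType) (m n : nat) (A : tensor R m.+1 n) (k : 'I_n)
  : tensor R m n := fun t => A [tuple of k :: t].

(* root tensor A_1 (index 1 of the paper = ordinal 0) *)
Definition root_tensor (R : realFieldType) (m n : nat) (hn : (0 < n)%N)
  (A : tensor R m.+1 n) : tensor R m n := row_tensor A (Ordinal hn).

Definition doubly_circulant (R : realFieldType) (m n : nat) (hn : (0 < n)%N)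
  (A : tensor R m.+1 n) : Prop :=
  circulant A /\ forall k : 'I_n, forall t, row_tensor A k t = root_tensor hn A t.

(* Main.v *)
Require Import Defs.
From HB Require Import structures.
From mathcomp Require Import all_boot all_order all_algebra.
From mathcomp Require Import lra.
Import Order.TTheory GRing.Theory Num.Theory.
Local Open Scope ring_scope.

Lemma tpoly_decomp (R : realFieldType) (m n : nat) (A : tensor R m.+1 n) x :
  tpoly A x = \sum_(k : 'I_n) x k * tpoly (row_tensor A k) x.
Proof.
rewrite /tpoly.
rewrite (reindex (fun p : 'I_n * m.-tuple 'I_n => [tuple of p.1 :: p.2])) /=; last first.
  apply: onW_bij; exists (fun t : m.+1.-tuple 'I_n => (thead t, [tuple of behead t])).
    by case=> a t /=; congr pair; apply: val_inj.
  by move=> t /=; rewrite [RHS]tuple_eta.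
rewrite -(pair_big xpredT xpredT (fun i (t : m.-tuple 'I_n) =>
   A [tuple of i :: t] * \prod_(j < m.+1) x (tnth [tuple of i :: t] j))) /=.
apply: eq_bigr => k _; rewrite mulr_sumr; apply: eq_bigr => t _.
rewrite big_ord_recl tnth0 /row_tensor.
rewrite mulrCA; congr (_ * (_ * _)); apply: eq_bigr => j _.
by rewrite (tnth_nth k) (tnth_nth k).
Qed.

Lemma tpoly_reindex (R : realFieldType) (m n : nat) (B C : tensor R m n)
  (f g : 'I_n -> 'I_n) (fK : cancel f g) (gK : cancel g f) x :
  (forall t, B t = C [tuple of map f t]) ->
  tpoly B x = tpoly C (fun i => x (g i)).
Proof.
move=> hBC; rewrite /tpoly.
rewrite (reindex (fun s : m.-tuple 'I_n => [tuple of map g s])) /=; last first.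
  apply: onW_bij; exists (fun s : m.-tuple 'I_n => [tuple of map f s]).
    by move=> s; apply: val_inj => /=; rewrite -map_comp (eq_map gK) map_id.
  by move=> s; apply: val_inj => /=; rewrite -map_comp (eq_map fK) map_id.
apply: eq_bigr => s _; rewrite hBC; congr (_ * _).
  by congr C; apply: val_inj => /=; rewrite -map_comp (eq_map gK) map_id.
by apply: eq_bigr => j _; rewrite tnth_map.
Qed.

Lemma circ_iter (R : realFieldType) (m n : nat) (A : tensor R m n) j :
  circulant A -> forall t, A t = A [tuple of map (iter j (@ordS n)) t].
Proof.
move=> hA; elim: j => [|j IH] t.
  by congr A; apply: val_inj => /=; rewrite map_id.
rewrite IH hA; congr A; apply: val_inj => /=; rewrite -map_comp.
by apply: eq_map => i.
Qed.

Lemma iter_ordS_val n (i : 'I_n) j : val (iter j (@ordS n) i) = ((i + j) %% n)%N.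
Proof.
elim: j => [|j IH] /=; first by rewrite addn0 modn_small.
rewrite /ordS /= IH -addn1 modnDml addn1 addnS //.
Qed.

Lemma iter_cancel n j : cancel (iter j (@ordS n)) (iter j (@ord_pred n)).
Proof.
elim: j => [//|j IH] i.
by rewrite iterSr iterS ordSK IH.
Qed.

Lemma iter_cancel' n j : cancel (iter j (@ord_pred n)) (iter j (@ordS n)).
Proof.
elim: j => [//|j IH] i.
by rewrite iterSr iterS ord_predK IH.
Qed.

Lemma row_root (R : realFieldType) (m n : nat) (hn : (0 < n)%N) (A : tensor R m.+1 n)
  (hA : circulant A) (k : 'I_n) x :
  tpoly (row_tensor A k) x = tpoly (root_tensor hn A) (fun i => x (iter (n - k)%N (@ord_pred n) i)).
Proof.
apply: (@tpoly_reindex R m n (row_tensor A k) (root_tensor hn A) _ _ (@iter_cancel n (n - k)%N) (@iter_cancel' n (n - k)%N) x) => t.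
rewrite /row_tensor /root_tensor /row_tensor (@circ_iter _ _ _ A (n - k)%N hA).
congr A; apply: val_inj => /=; congr cons; apply: val_inj.
by rewrite iter_ordS_val /= subnKC ?modnn // ltnW.
Qed.

Lemma sum_pos (R : realFieldType) n (x : 'I_n -> R) :
  nonneg_vec x -> (exists i, x i != 0) -> 0 < \sum_k x k.
Proof.
move=> hx [i hi]; rewrite (bigD1 i) //=.
have h1 : 0 < x i by rewrite lt0r hi hx.
have h2 : 0 <= \sum_(k | k != i) x k by apply: sumr_ge0 => k _; apply: hx.
lra.
Qed.

Theorem mainTheorem4 (R : realFieldType) (m n : nat) (hm : (1 <= m)%N) (hn : (0 < n)%N)
  (A : tensor R m.+1 n) (hA : circulant A) :
  (copositive (root_tensor hn A) -> copositive A) /\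
  (strictly_copositive (root_tensor hn A) -> strictly_copositive A) /\
  (doubly_circulant hn A ->
     (copositive A <-> copositive (root_tensor hn A)) /\
     (strictly_copositive A <-> strictly_copositive (root_tensor hn A))).
Proof.
have P1 : copositive (root_tensor hn A) -> copositive A.
  move=> hc x hx; rewrite tpoly_decomp; apply: sumr_ge0 => k _.
  rewrite row_root //; apply: mulr_ge0; first exact: hx.
  by apply: hc => i; apply: hx.
have P2 : strictly_copositive (root_tensor hn A) -> strictly_copositive A.
  move=> hc x hx [i hi]; rewrite tpoly_decomp (bigD1 i) //=.
  have h1 : 0 < x i * tpoly (row_tensor A i) x.
    apply: mulr_gt0; first by rewrite lt0r hi hx.
    rewrite row_root //; apply: hc => [j|]; first exact: hx.
    by exists (iter (n - i)%N (@ordS n) i); rewrite iter_cancel.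
  have h2 : 0 <= \sum_(k | k != i) x k * tpoly (row_tensor A k) x.
    apply: sumr_ge0 => k _; have [->|hk] := eqVneq (x k) 0; first by rewrite mul0r.
    rewrite row_root //; apply: mulr_ge0; first exact: hx.
    apply: ltW; apply: hc => [j|]; first exact: hx.
    by exists (iter (n - k)%N (@ordS n) k); rewrite iter_cancel.
  lra.
split; first exact: P1.
split; first exact: P2.
move=> [_ hd].
have E : forall x, tpoly A x = (\sum_k x k) * tpoly (root_tensor hn A) x.
  move=> x; rewrite tpoly_decomp mulr_suml; apply: eq_bigr => k _.
  by congr (_ * _); apply: eq_bigr => t _; rewrite hd.
split; split => //.
- move=> hc x hx.
  case: (boolP [exists i, x i != 0]) => [/existsP ex|/existsPn nex].
    have := hc x hx; rewrite E pmulr_rge0 //; exact: sum_pos.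
  rewrite /tpoly; apply: sumr_ge0 => t _.
  rewrite (bigD1 (Ordinal hm)) //=.
  have -> : x (tnth t (Ordinal hm)) = 0 by apply/eqP; have := nex (tnth t (Ordinal hm)); rewrite negbK.
  by rewrite mul0r mulr0.
- move=> hc x hx ex; have := hc x hx ex; rewrite E pmulr_rgt0 //; exact: sum_pos.
Qed.
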